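(* Let $\Phi$ be either the squared hinge loss $\Phi(u)=\max(1-u,0)^2$ or the modified Huber loss ($\Phi(u)=0$ for $u\ge1$, $\Phi(u)=-4u$ for $u\le-1$, $\Phi(u)=(1-u)^2$ otherwise). Then there do not exist a convex set $\bar{\mathcal{D}}\subseteq\mathbb{R}$ with $[0,1]\subseteq\bar{\mathcal{D}}$, a strictly convex differentiable $\bar h:\bar{\mathcal{D}}\to\mathbb{R}$ and a continuous bijection $\bar t:\bar{\mathcal{D}}\to\mathbb{R}$ such that $$q\Phi(v)+(1-q)\Phi(-v)-\inf_{v'\in\mathbb{R}}\big(q\Phi(v')+(1-q)\Phi(-v')\big)=D_{\bar h}(q,\bar t^{-1}(v))\quad\text{for all } v\in\mathbb{R},\,q\in[0,1].$$
   Context: $D_{\bar h}(a,b)=\bar h(a)-\bar h(b)-\bar h'(b)(a-b)$ denotes the Bregman divergence of $\bar h$. *)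

(* Defs.v *)
From Stdlib Require Import Reals Lra.
Open Scope R_scope.

Definition sq_hinge (u : R) : R := Rsqr (Rmax (1 - u) 0).

Definition mod_huber (u : R) : R :=
  if Rle_dec 1 u then 0
  else if Rle_dec u (-1) then -4 * u
  else Rsqr (1 - u).

Definition cond_risk (Phi : R -> R) (q v : R) : R :=
  q * Phi v + (1 - q) * Phi (- v).

Definition is_glb (E : R -> Prop) (m : R) : Prop :=
  (forall x, E x -> m <= x) /\ (forall b, (forall x, E x -> b <= x) -> b <= m).

Definition convex_set (D : R -> Prop) : Prop :=
  forall x y s, D x -> D y -> 0 <= s <= 1 -> D (s * x + (1 - s) * y).

Definition strictly_convex_on (D : R -> Prop) (h : R -> R) : Prop :=
  forall x y s, D x -> D y -> x <> y -> 0 < s < 1 ->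
    h (s * x + (1 - s) * y) < s * h x + (1 - s) * h y.

Definition deriv_within (D : R -> Prop) (f : R -> R) (x l : R) : Prop :=
  forall eps, 0 < eps -> exists delta, 0 < delta /\
    forall y, D y -> y <> x -> Rabs (y - x) < delta ->
      Rabs ((f y - f x) / (y - x) - l) < eps.

Definition continuous_within (D : R -> Prop) (f : R -> R) (x : R) : Prop :=
  forall eps, 0 < eps -> exists delta, 0 < delta /\
    forall y, D y -> Rabs (y - x) < delta -> Rabs (f y - f x) < eps.

Definition bregman (h h' : R -> R) (a b : R) : R :=
  h a - h b - h' b * (a - b).

(* Main.v *)
Require Import Defs.
From Stdlib Require Import Reals Lra.
Open Scope R_scope.

Lemma subgrad (D : R -> Prop) (h h' : R -> R) (b y : R) :
  convex_set D -> strictly_convex_on D h -> deriv_within D h b (h' b) ->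
  D b -> D y -> h' b * (y - b) <= h y - h b.
Proof.
  intros Hc Hs Hder Db Dy.
  destruct (Req_dec y b) as [->|Hne]; [lra|].
  apply Rnot_lt_le; intro Hlt.
  set (g := h y - h b - h' b * (y - b)).
  assert (Hg : g < 0) by (unfold g; lra).
  set (d := Rabs (y - b)).
  assert (Hd : 0 < d) by (apply Rabs_pos_lt; lra).
  assert (He : 0 < - g / d) by (apply Rdiv_lt_0_compat; lra).
  destruct (Hder _ He) as [del [Hdel Hq]].
  set (s := Rmin (1/2) (del / (2 * d))).
  assert (Hs1 : s <= 1/2) by apply Rmin_l.
  assert (Hs2 : s <= del / (2 * d)) by apply Rmin_r.
  assert (Hs0 : 0 < s).
  { unfold s; apply Rmin_pos; [lra|]. apply Rdiv_lt_0_compat; lra. }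
  assert (Hsd : s * d < del).
  { assert (s * d <= del / (2 * d) * d) by (apply Rmult_le_compat_r; lra).
    assert (del / (2 * d) * d = del / 2) by (field; lra). lra. }
  set (z := s * y + (1 - s) * b).
  assert (Dz : D z) by (apply Hc; auto; lra).
  assert (Hzb : z - b = s * (y - b)) by (unfold z; ring).
  assert (Hzne : z - b <> 0).
  { rewrite Hzb. apply Rmult_integral_contrapositive; split; lra. }
  assert (Habz : Rabs (z - b) = s * d).
  { rewrite Hzb, Rabs_mult, (Rabs_pos_eq s) by lra. reflexivity. }
  assert (Hz' : z <> b) by (intro E; apply Hzne; lra).
  specialize (Hq z Dz Hz' ltac:(lra)).
  assert (Hsc : h z < s * h y + (1 - s) * h b) by (apply Hs; auto; lra).
  set (Q := (h z - h b) / (z - b) - h' b) in *.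
  assert (HQ : Q * (z - b) = h z - h b - h' b * (z - b)) by (unfold Q; field; auto).
  assert (HQ2 : Q * (z - b) < s * g).
  { rewrite HQ, Hzb. unfold g. nra. }
  assert (HA : Rabs (Q * (z - b)) = Rabs Q * (s * d)) by (rewrite Rabs_mult, Habz; reflexivity).
  assert (HB : Rabs Q * (s * d) < (- g / d) * (s * d)).
  { apply Rmult_lt_compat_r; [nra|exact Hq]. }
  assert (HC : (- g / d) * (s * d) = - g * s) by (field; lra).
  assert (HD : - (Q * (z - b)) <= Rabs (Q * (z - b))).
  { rewrite <- Rabs_Ropp. apply Rle_abs. }
  nra.
Qed.

Lemma bregman_pos (D : R -> Prop) (h h' : R -> R) (a b : R) :
  convex_set D -> strictly_convex_on D h -> deriv_within D h b (h' b) ->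
  D a -> D b -> a <> b -> 0 < bregman h h' a b.
Proof.
  intros Hc Hs Hder Da Db Hne. unfold bregman.
  set (c := (1/2) * a + (1 - 1/2) * b).
  assert (Dc : D c) by (apply Hc; auto; lra).
  assert (H1 := subgrad D h h' b c Hc Hs Hder Db Dc).
  assert (H2 : h c < (1/2) * h a + (1 - 1/2) * h b) by (apply Hs; auto; lra).
  assert (Hcb : c - b = (a - b) / 2) by (unfold c; field).
  rewrite Hcb in H1. lra.
Qed.

Lemma Phi_facts (Phi : R -> R) :
  Phi = sq_hinge \/ Phi = mod_huber ->
  (forall v, 0 <= Phi v) /\ Phi 1 = 0 /\ Phi 2 = 0.
Proof.
  intros [-> | ->].
  - unfold sq_hinge. repeat split.
    + intro v; apply Rle_0_sqr.
    + rewrite Rmax_right by lra. unfold Rsqr; ring.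
    + rewrite Rmax_right by lra. unfold Rsqr; ring.
  - unfold mod_huber. repeat split.
    + intro v. destruct (Rle_dec 1 v); [lra|].
      destruct (Rle_dec v (-1)); [lra|apply Rle_0_sqr].
    + destruct (Rle_dec 1 1); lra.
    + destruct (Rle_dec 1 2); lra.
Qed.

Theorem propositionF1 (Phi : R -> R) :
  Phi = sq_hinge \/ Phi = mod_huber ->
  ~ exists (D : R -> Prop) (h h' t : R -> R),
      convex_set D /\
      (forall x, 0 <= x <= 1 -> D x) /\
      strictly_convex_on D h /\
      (forall x, D x -> deriv_within D h x (h' x)) /\
      (forall x, D x -> continuous_within D t x) /\
      (forall x y, D x -> D y -> t x = t y -> x = y) /\
      (forall v, exists x, D x /\ t x = v) /\
      (forall v q x m, 0 <= q <= 1 -> D x -> t x = v ->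
         is_glb (fun r => exists v', r = cond_risk Phi q v') m ->
         cond_risk Phi q v - m = bregman h h' q x).
Proof.
  intros HP [D [h [h' [t [Hc [H01 [Hs [Hder [_ [_ [Hsurj Heq]]]]]]]]]]].
  destruct (Phi_facts Phi HP) as [Hnn [P1 P2]].
  assert (Hcr : forall v, cond_risk Phi 1 v = Phi v)
    by (intro v; unfold cond_risk; ring).
  assert (Hglb : is_glb (fun r => exists v', r = cond_risk Phi 1 v') 0).
  { split.
    - intros r [v' ->]. rewrite Hcr. apply Hnn.
    - intros b Hb. specialize (Hb (cond_risk Phi 1 1) (ex_intro _ 1 eq_refl)).
      rewrite Hcr, P1 in Hb. exact Hb. }
  assert (D1 : D 1) by (apply H01; lra).
  assert (Key : forall v, Phi v = 0 -> forall x, D x -> t x = v -> x = 1).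
  { intros v Hv x Dx Htx.
    specialize (Heq v 1 x 0 ltac:(lra) Dx Htx Hglb).
    rewrite Hcr, Hv in Heq.
    destruct (Req_dec x 1) as [E|Hne]; [exact E|].
    assert (Hp := bregman_pos D h h' 1 x Hc Hs (Hder x Dx) D1 Dx (not_eq_sym Hne)).
    lra. }
  destruct (Hsurj 1) as [x1 [Dx1 Ht1]].
  destruct (Hsurj 2) as [x2 [Dx2 Ht2]].
  assert (E1 := Key 1 P1 x1 Dx1 Ht1).
  assert (E2 := Key 2 P2 x2 Dx2 Ht2).
  subst. rewrite Ht1 in Ht2. lra.
Qed.
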